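(* For every finite simple graph $H$: (i) $\rho(H)\le\rho_R(H)$. (ii) If $H'$ is obtained from $H$ by removing some edges (keeping all vertices), then $\rho_R(H')\ge\rho_R(H)$. (iii) If $H$ is the union of two vertex-disjoint graphs $H_1$ and $H_2$ together with possibly some additional edges between $V(H_1)$ and $V(H_2)$, and $m(H_1,H_2)$ denotes the number of pairs $(u,v)$ with $u\in V(H_1)$, $v\in V(H_2)$, $uv\notin E(H)$, then $$\rho_R(H_1)+\rho_R(H_2)\le\rho_R(H)\le\rho_R(H_1)+\rho_R(H_2)+m(H_1,H_2).$$
   Context: All graphs are finite and simple. A coloring means a proper vertex coloring; an induced subgraph is rainbow if all its vertices have pairwise different colors. $\rho(H)$ is the least number $m$ such that some graph $G$ on $m$ vertices has the property that every proper vertex coloring of $G$ contains a rainbow induced subgraph isomorphic to $H$. If $V(H)=\{h_1,\ldots,h_n\}$, a replication graph of $H$ is a graph $G$ obtained by replacing each vertex $h_i$ by a clique $K_i$ with $|K_i|\ge1$ (cliques pairwise vertex-disjoint), where two vertices in different cliques $K_i,K_j$ are adjacent iff $h_ih_j\in E(H)$. $\rho_R(H)$ is the minimum order of a replication graph $G$ of $H$ such that every proper vertex coloring of $G$ admits a choice of exactly one vertex from each clique $K_i$ with all chosen vertices of pairwise different colors (such a choice induces a rainbow copy of $H$). *)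

(* Defs.v *)
From Stdlib Require Import ClassicalEpsilon.
From mathcomp Require Import all_boot.
Set Implicit Arguments. Unset Strict Implicit. Unset Printing Implicit Defensive.

Definition simple_graph (V : finType) (e : rel V) : Prop :=
  symmetric e /\ irreflexive e.

Definition proper_coloring (V : finType) (e : rel V) (c : V -> nat) : Prop :=
  forall x y, e x y -> c x <> c y.

(* The least natural number satisfying P (0 if there is none; in our uses
   such numbers always exist). *)
Definition decb (P : Prop) : bool :=
  if excluded_middle_informative P then true else false.

Lemma decbP (P : Prop) : decb P = true <-> P.
Proof. rewrite /decb; case: excluded_middle_informative => //. Qed.

Lemma ex_decb (P : nat -> Prop) : (exists n, P n) -> exists n, decb (P n).
Proof. by case=> n Hn; exists n; apply/decbP. Qed.

Definition least_nat (P : nat -> Prop) : nat :=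
  match excluded_middle_informative (exists n, P n) with
  | left ex => ex_minn (ex_decb ex)
  | right _ => 0
  end.

Definition rainbow_forcing (V : finType) (eH : rel V) (m : nat) (eG : rel 'I_m) : Prop :=
  forall c : 'I_m -> nat, proper_coloring eG c ->
    exists f : V -> 'I_m,
      (forall u v, eG (f u) (f v) = eH u v) /\ injective (fun v => c (f v)).

Definition rho_prop (V : finType) (eH : rel V) (m : nat) : Prop :=
  exists eG : rel 'I_m, simple_graph eG /\ rainbow_forcing eH eG.

Definition rho (V : finType) (eH : rel V) : nat := least_nat (rho_prop eH).

(* Replication graph of H with clique sizes k : V -> nat; vertex (i, a)
   is the a-th vertex of the clique K_i. *)
Definition repl_vertex (V : finType) (k : V -> nat) : finType :=
  {i : V & 'I_(k i)}.

Definition repl_adj (V : finType) (eH : rel V) (k : V -> nat) : rel (repl_vertex k) :=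
  fun x y => if projT1 x == projT1 y then x != y else eH (projT1 x) (projT1 y).
Arguments repl_adj {V} eH k.

Definition repl_good (V : finType) (eH : rel V) (k : V -> nat) : Prop :=
  forall c : repl_vertex k -> nat, proper_coloring (repl_adj eH k) c ->
    exists s : forall i : V, 'I_(k i),
      injective (fun i => c (existT (fun j => 'I_(k j)) i (s i))).

Definition rhoR_prop (V : finType) (eH : rel V) (m : nat) : Prop :=
  exists k : V -> nat,
    (forall i, 0 < k i) /\ \sum_(i : V) k i = m /\ repl_good eH k.

Definition rhoR (V : finType) (eH : rel V) : nat := least_nat (rhoR_prop eH).

Definition left_part (V1 V2 : finType) (e : rel (V1 + V2)%type) : rel V1 :=
  fun x y => e (inl x) (inl y).
Definition right_part (V1 V2 : finType) (e : rel (V1 + V2)%type) : rel V2 :=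
  fun x y => e (inr x) (inr y).

Definition nonadj_cross (V1 V2 : finType) (e : rel (V1 + V2)%type) : nat :=
  #|[set p : V1 * V2 | ~~ e (inl p.1) (inr p.2)]|.

(* Main.v *)
Require Import Defs.
From mathcomp Require Import all_boot zify.
From Stdlib Require Import Eqdep_dec ClassicalEpsilon.
Set Implicit Arguments. Unset Strict Implicit. Unset Printing Implicit Defensive.

Lemma least_nat_le (P : nat -> Prop) n : P n -> least_nat P <= n.
Proof.
move=> Pn; rewrite /least_nat; case: excluded_middle_informative => [ex|[]]; last by exists n.
case: ex_minnP => m _ H; apply: H; exact/decbP.
Qed.

Lemma least_nat_spec (P : nat -> Prop) : (exists n, P n) -> P (least_nat P).
Proof.
move=> ex0; rewrite /least_nat; case: excluded_middle_informative => [ex|//].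
by case: ex_minnP => m /decbP.
Qed.

Lemma existT_inj2 (I : eqType) (T : I -> Type) i (a b : T i) :
  existT T i a = existT T i b -> a = b.
Proof. apply: inj_pair2_eq_dec => x y; exact: (decP (x =P y)). Qed.

Lemma repl_adj_irr (V : finType) (e : rel V) k x : repl_adj e k x x = false.
Proof. by rewrite /repl_adj eqxx eqxx. Qed.

Lemma repl_adj_same (V : finType) (e : rel V) k i (a b : 'I_(k i)) :
  a != b -> repl_adj e k (existT _ i a) (existT _ i b).
Proof.
move=> ab; rewrite /repl_adj /= eqxx; apply/eqP => E.
by move: ab; rewrite (existT_inj2 E) eqxx.
Qed.

Lemma proper_clique (V : finType) (e : rel V) k c i :
  proper_coloring (repl_adj e k) c -> injective (fun a : 'I_(k i) => c (existT _ i a)).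
Proof.
move=> pc a b /= cab; apply/eqP; apply/negPn/negP => ab.
exact: (pc _ _ (repl_adj_same e ab)).
Qed.

Lemma greedy (I : finType) (k : I -> nat) (g : forall i, 'I_(k i) -> nat) :
  (forall i, injective (g i)) -> (forall i, #|I| <= k i) ->
  exists s : forall i, 'I_(k i), injective (fun i => g i (s i)).
Proof.
move=> ginj kI.
have pos : forall i, 0 < k i.
  by move=> i; apply: leq_trans (kI i); apply/card_gt0P; exists i.
suff H : forall n (S : {set I}), #|S| = n ->
  exists s : forall i, 'I_(k i), {in S &, injective (fun i => g i (s i))}.
  have [s Hs] := H _ [set: I] erefl.
  by exists s => x y /(Hs x y (in_setT x) (in_setT y)).
elim=> [|n IH] S cS.
  exists (fun i => Ordinal (pos i)) => x y.
  by move: cS => /eqP; rewrite cards_eq0 => /eqP ->; rewrite in_set0.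
have : 0 < #|S| by rewrite cS.
case/card_gt0P=> x xS.
have cS' : #|S :\ x| = n by move: cS; rewrite (cardsD1 x S) xS add1n => -[].
have [s Hs] := IH _ cS'.
set U := [seq g j (s j) | j <- enum (S :\ x)].
have [a aU] : exists a : 'I_(k x), g x a \notin U.
  case: (pickP (fun a => g x a \notin U)) => [a aU|Hall]; first by exists a.
  exfalso.
  have : size (map (g x) (enum 'I_(k x))) <= size U.
    apply: uniq_leq_size.
      by rewrite (map_inj_uniq (ginj x)) enum_uniq.
    by move=> y /mapP [a _ ->]; move: (Hall a) => /= /negbFE.
  rewrite size_map -cardT card_ord /U size_map -cardE cS'.
  move=> le; have h2 := leq_trans (kI x) le.
  have h1 : n < #|I| by rewrite -cS max_card.
  by move: (leq_trans h1 h2); rewrite ltnn.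
exists (dfwith s a) => y z yS zS.
case: (eqVneq x y) => [<-|xy]; case: (eqVneq x z) => [<-|xz] //.
- rewrite dfwith_in dfwith_out // => E; exfalso; move/negP: aU; apply.
  by rewrite E; apply/mapP; exists z => //; rewrite mem_enum !inE eq_sym xz.
- rewrite dfwith_in dfwith_out // => E; exfalso; move/negP: aU; apply.
  by rewrite -E; apply/mapP; exists y => //; rewrite mem_enum !inE eq_sym xy.
- rewrite !dfwith_out //; apply: Hs; by rewrite !inE eq_sym ?xy ?xz.
Qed.

Lemma rhoR_exists (V : finType) (e : rel V) : exists m, rhoR_prop e m.
Proof.
exists (\sum_(i : V) #|V|); exists (fun _ => #|V|); split; last split => //.
  by move=> i; apply/card_gt0P; exists i.
move=> c pc.
have := @greedy V (fun _ => #|V|) (fun i a => c (existT _ i a)).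
by apply=> // i; apply: proper_clique pc.
Qed.

Lemma rhoR_spec (V : finType) (e : rel V) : rhoR_prop e (rhoR e).
Proof. apply: least_nat_spec; exact: rhoR_exists. Qed.

Lemma rhoR_le (V : finType) (e : rel V) m : rhoR_prop e m -> rhoR e <= m.
Proof. exact: least_nat_le. Qed.

Definition liftH (V W : finType) (phi : W -> V) (k : V -> nat) (k' : W -> nat)
  (h : forall u, 'I_(k' u) -> 'I_(k (phi u))) (x : repl_vertex k') : repl_vertex k :=
  existT (fun i => 'I_(k i)) (phi (projT1 x)) (h _ (projT2 x)).

Lemma liftH_inj (V W : finType) (phi : W -> V) (k : V -> nat) (k' : W -> nat)
  (h : forall u, 'I_(k' u) -> 'I_(k (phi u))) :
  injective phi -> (forall u, injective (h u)) -> injective (liftH h).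
Proof.
move=> phiinj hinj [u a] [u' a'] E.
have /= eu := f_equal (@projT1 _ _) E.
move/phiinj: eu => eu; subst u'.
have E2 := existT_inj2 E; have := hinj u _ _ E2; rewrite /= => -> //.
Qed.

Lemma adj_liftH (V W : finType) (e : rel V) (eW : rel W) (phi : W -> V) (k : V -> nat) (k' : W -> nat)
  (h : forall u, 'I_(k' u) -> 'I_(k (phi u))) :
  injective phi -> (forall u, injective (h u)) -> (forall u u', eW u u' = e (phi u) (phi u')) ->
  forall x y, repl_adj e k (liftH h x) (liftH h y) = repl_adj eW k' x y.
Proof.
move=> phiinj hinj heW x y.
by rewrite /repl_adj /= (inj_eq phiinj) (inj_eq (liftH_inj phiinj hinj)) heW.
Qed.

Lemma proper_liftH (V W : finType) (e : rel V) (eW : rel W) (phi : W -> V) (k : V -> nat) (k' : W -> nat)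
  (h : forall u, 'I_(k' u) -> 'I_(k (phi u))) c :
  injective phi -> (forall u, injective (h u)) -> (forall u u', eW u u' = e (phi u) (phi u')) ->
  proper_coloring (repl_adj e k) c -> proper_coloring (repl_adj eW k') (fun x => c (liftH h x)).
Proof.
move=> phiinj hinj heW pc x y; rewrite -(adj_liftH phiinj hinj heW); exact: pc.
Qed.

Lemma good_restrict (V W : finType) (e : rel V) (eW : rel W) (phi : W -> V) (k : V -> nat) :
  injective phi -> (forall u u', eW u u' = e (phi u) (phi u')) ->
  repl_good e k -> repl_good eW (fun u => k (phi u)).
Proof.
move=> phiinj heW good c' pc'.
pose h := fun u => @id 'I_(k (phi u)).
have hinj : forall u, injective (h u) by move=> u.
pose L := @liftH V W phi k (fun u => k (phi u)) h.
have Linj : injective L := liftH_inj phiinj hinj.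
pose N := (\max_y c' y).+1.
pose c x := if [pick y | L y == x] is Some y then c' y else N + enum_rank x.
have cL : forall y, c (L y) = c' y.
  move=> y; rewrite /c; case: pickP => [y' /eqP /Linj -> //|H].
  by move: (H y); rewrite eqxx.
have dich : forall x, (exists y, x = L y) \/ (c x = N + enum_rank x).
  move=> x; rewrite /c; case: pickP => [y /eqP <-|_]; [left; exists y|right] => //.
have ltN : forall y, c' y < N by move=> y; rewrite ltnS leq_bigmax.
have pc : proper_coloring (repl_adj e k) c.
  move=> x y adj.
  case: (dich x) => [[x' ex]|cx]; case: (dich y) => [[y' ey]|cy];
    move: adj; rewrite ?ex ?ey => adj.
  - rewrite !cL; apply: pc'; by rewrite -(adj_liftH phiinj hinj heW).
  - by rewrite cL cy => E; move: (ltN x'); rewrite E ltnNge leq_addr.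
  - by rewrite cx cL => E; move: (ltN y'); rewrite -E ltnNge leq_addr.
  - rewrite cx cy => /eqP; rewrite eqn_add2l => /eqP E; have exy := enum_rank_inj (val_inj E).
    by move: adj; rewrite exy repl_adj_irr.
have [s sinj] := good c pc.
exists (fun u => s (phi u)) => u u' /= E.
apply: phiinj; apply: sinj => /=.
by move: E; rewrite -!cL.
Qed.

Lemma card_repl (V : finType) (k : V -> nat) : #|{: repl_vertex k}| = \sum_i k i.
Proof.
rewrite /repl_vertex card_tagged sumnE big_map big_enum /=.
by apply: eq_bigr => i _; rewrite card_ord.
Qed.

Lemma part1 (V : finType) (e : rel V) : simple_graph e -> rho e <= rhoR e.
Proof.
move=> [esy eirr].
have [k [kpos [ksum kgood]]] := rhoR_spec e.
apply: least_nat_le.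
have H : #|{: repl_vertex k}| = rhoR e by rewrite card_repl.
pose phi (x : repl_vertex k) : 'I_(rhoR e) := cast_ord H (enum_rank x).
pose psi (i : 'I_(rhoR e)) : repl_vertex k := enum_val (cast_ord (esym H) i).
have psiK : forall x, psi (phi x) = x.
  by move=> x; rewrite /psi /phi cast_ordK enum_rankK.
exists (fun i j => repl_adj e k (psi i) (psi j)); split.
  split.
    move=> i j; rewrite /repl_adj eq_sym [psi j == _]eq_sym; by rewrite esy.
  by move=> i; rewrite repl_adj_irr.
move=> c pc.
have pc' : proper_coloring (repl_adj e k) (fun x => c (phi x)).
  by move=> x y adj; apply: pc; rewrite !psiK.
have [s sinj] := kgood _ pc'.
exists (fun v => phi (existT _ v (s v))); split; last first.
  by move=> u v /= E; apply: sinj.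
move=> u v; rewrite !psiK /repl_adj /=.
case: (eqVneq u v) => [<-|uv] //.
by rewrite eqxx /= eirr.
Qed.

Lemma part2 (V : finType) (e e' : rel V) :
  (forall x y, e' x y -> e x y) -> rhoR e <= rhoR e'.
Proof.
move=> sub.
have [k [kpos [ksum kgood]]] := rhoR_spec e'.
apply: rhoR_le; exists k; split => //; split => // c pc.
apply: kgood => x y adj; apply: pc; move: adj; rewrite /repl_adj.
by case: ifP => // _; apply: sub.
Qed.

Lemma part3a (V1 V2 : finType) (e : rel (V1 + V2)%type) :
  rhoR (left_part e) + rhoR (right_part e) <= rhoR e.
Proof.
have [k [kpos [ksum kgood]]] := rhoR_spec e.
have inlI : injective (@inl V1 V2) by move=> a b [].
have inrI : injective (@inr V1 V2) by move=> a b [].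
have g1 := good_restrict (eW := left_part e) inlI (fun _ _ => erefl) kgood.
have g2 := good_restrict (eW := right_part e) inrI (fun _ _ => erefl) kgood.
have /rhoR_le l1 : rhoR_prop (left_part e) (\sum_u k (inl u)) by exists (fun u => k (inl u)).
have /rhoR_le l2 : rhoR_prop (right_part e) (\sum_u k (inr u)) by exists (fun u => k (inr u)).
rewrite -ksum big_sumType /=; exact: leq_add.
Qed.

Lemma cross_sum (V1 V2 : finType) (e : rel (V1 + V2)%type) :
  \sum_u #|[set v | ~~ e (inl u) (inr v)]| = nonadj_cross e.
Proof.
transitivity (\sum_(u : V1) \sum_(v : V2) (if ~~ e (inl u) (inr v) then 1 else 0)).
  apply: eq_bigr => u _; rewrite -sum1_card big_mkcond; apply: eq_bigr => v _.
  by rewrite inE.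
rewrite pair_big /= /nonadj_cross -sum1_card [RHS]big_mkcond /=.
apply: eq_bigr => -[u v] _; by rewrite inE.
Qed.

Lemma part3b (V1 V2 : finType) (e : rel (V1 + V2)%type) :
  rhoR e <= rhoR (left_part e) + rhoR (right_part e) + nonadj_cross e.
Proof.
have [k1 [k1pos [k1sum k1good]]] := rhoR_spec (left_part e).
have [k2 [k2pos [k2sum k2good]]] := rhoR_spec (right_part e).
have inlI : injective (@inl V1 V2) by move=> a b [].
have inrI : injective (@inr V1 V2) by move=> a b [].
pose Nu u := [set v | ~~ e (inl u) (inr v)].
pose k (i : (V1 + V2)%type) := match i with inl u => k1 u + #|Nu u| | inr v => k2 v end.
apply: rhoR_le; exists k; split; last split.
- by case=> [u|v] /=; [rewrite ltn_addr | ].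
- rewrite big_sumType /= big_split /= cross_sum k1sum k2sum; lia.
move=> c pc.
pose h2 := fun v => (@id 'I_(k2 v) : 'I_(k2 v) -> 'I_(k (inr v))).
have h2inj : forall v, injective (h2 v) by move=> v.
have pc2 := proper_liftH (eW := right_part e) (k' := k2) (h := h2) inrI h2inj (fun _ _ => erefl) pc.
have [s2 s2inj] := k2good _ pc2.
pose col v := c (existT (fun i => 'I_(k i)) (inr v) (s2 v)).
pose Bs u := [set a : 'I_(k (inl u)) | [exists v in Nu u, c (existT (fun i => 'I_(k i)) (inl u) a) == col v]].
have cardB : forall u, #|Bs u| <= #|Nu u|.
  move=> u.
  pose f (a : 'I_(k (inl u))) := [pick v in Nu u | c (existT (fun i => 'I_(k i)) (inl u) a) == col v].
  have fB : forall a, a \in Bs u -> exists2 v, f a = Some v & (v \in Nu u) && (c (existT (fun i => 'I_(k i)) (inl u) a) == col v).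
    move=> a; rewrite inE => /existsP [v Hv]; rewrite /f.
    case: pickP => [v' Hv'|H]; first by exists v'.
    by move: (H v); rewrite Hv.
  have finj : {in Bs u &, injective f}.
    move=> a b aB bB E.
    have [v fa /andP [_ /eqP ca]] := fB a aB.
    have [v' fb /andP [_ /eqP cb]] := fB b bB.
    move: E; rewrite fa fb => -[ev]; subst v'.
    by apply: (proper_clique pc); rewrite /= ca cb.
  rewrite -(card_in_imset finj).
  have sub : f @: Bs u \subset Some @: Nu u.
    apply/subsetP => o /imsetP [a aB ->].
    have [v fa /andP [vN _]] := fB a aB.
    by rewrite fa; apply: imset_f.
  apply: leq_trans (subset_leq_card sub) _.
  by rewrite card_imset //; move=> x y [].
have hex : forall u, exists hu : 'I_(k1 u) -> 'I_(k (inl u)),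
    injective hu /\ forall a, hu a \notin Bs u.
  move=> u.
  have le : k1 u <= #|~: Bs u|.
    have := cardsC (Bs u); rewrite card_ord /= => E1; have := cardB u; move: E1.
    move: #|~: Bs u| #|Bs u| => y z; lia.
  exists (fun a => enum_val (widen_ord le a)); split.
    move=> a b /enum_val_inj /(congr1 val) /= E; exact: val_inj.
  move=> a; have := enum_valP (widen_ord le a); by rewrite inE.
pose h u := proj1_sig (constructive_indefinite_description _ (hex u)).
have hspec : forall u, injective (h u) /\ forall a, h u a \notin Bs u.
  move=> u; exact: (proj2_sig (constructive_indefinite_description _ (hex u))).
have hinj : forall u, injective (h u) by move=> u; case: (hspec u).
have pc1 := proper_liftH (eW := left_part e) (k' := k1) (h := h) inlI hinj (fun _ _ => erefl) pc.
have [s1 s1inj] := k1good _ pc1.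
pose s (i : (V1 + V2)%type) : 'I_(k i) :=
  match i as i0 return 'I_(k i0) with inl u => h u (s1 u) | inr v => s2 v end.
exists s.
have cross : forall u v, c (existT (fun i => 'I_(k i)) (inl u) (h u (s1 u))) <> col v.
  move=> u v E.
  case: (boolP (e (inl u) (inr v))) => euv.
    by apply: (pc _ _ _ E); rewrite /repl_adj /=.
  case: (hspec u) => _ /(_ (s1 u)); rewrite inE => /negP; apply.
  by apply/existsP; exists v; rewrite inE euv E eqxx.
case=> [u|v] [u'|v'] /= E.
- by rewrite (s1inj u u' E).
- by exfalso; apply: (cross u v').
- by exfalso; apply: (cross u' v); rewrite -E.
- by rewrite (s2inj v v' E).
Qed.

Theorem theorem4p1 :
  (forall (V : finType) (e : rel V), simple_graph e -> rho e <= rhoR e)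
  /\
  (forall (V : finType) (e e' : rel V), simple_graph e -> simple_graph e' ->
     (forall x y, e' x y -> e x y) -> rhoR e <= rhoR e')
  /\
  (forall (V1 V2 : finType) (e : rel (V1 + V2)%type), simple_graph e ->
     rhoR (left_part e) + rhoR (right_part e) <= rhoR e /\
     rhoR e <= rhoR (left_part e) + rhoR (right_part e) + nonadj_cross e).
Proof.
split; first exact: part1.
split; first by move=> V e e' _ _; exact: part2.
move=> V1 V2 e _; split; [exact: part3a | exact: part3b].
Qed.
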